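(* There is a constant $c$ such that for every $n\in\mathbb{N}_{\ge1}$ there exists a language $L_n$ recognized by a deterministic weak Muller automaton $\mathfrak{A}_n$ with Emerson–Lei acceptance condition, of size at most $c\cdot n$, such that Player $O$ wins $\Gamma_f(L_n)$ for some constant delay function $f$, but Player $I$ wins $\Gamma_g(L_n)$ for every delay function $g$ with $\sum_{i=0}^{n-1}g(i)\le 2^{2^n}$.
   Context: An $\omega$-automaton $\mathfrak{A}=(Q,\Sigma,q_I,\Delta,\mathrm{Acc})$ has finite state set $Q$, alphabet $\Sigma$, initial state $q_I$, transitions $\Delta\subseteq Q\times\Sigma\times Q$, accepting runs $\mathrm{Acc}\subseteq\Delta^\omega$; $L(\mathfrak{A})$ is the set of words processed by an initial accepting run. Deterministic means $\Delta$ is a total function $Q\times\Sigma\to Q$. A weak Muller automaton has $\mathcal{F}\subseteq 2^Q$ and accepts runs whose set of visited states lies in $\mathcal{F}$. Emerson–Lei representation: $\mathcal{F}$ is given by a Boolean formula $\varphi$ over variables $Q$, $\mathcal{F}$ being the sets $F\subseteq Q$ such that the assignment making exactly the elements of $F$ true satisfies $\varphi$; the size of the automaton is $|Q|+|\varphi|$ ($|\varphi|$ the length of $\varphi$). A delay function is $f:\mathbb{N}\to\mathbb{N}_{\ge1}$; it is constant if $f(i)=1$ for all $i>0$. In the delay game $\Gamma_f(L)$, $L\subseteq(\Sigma_I\times\Sigma_O)^\omega$, in round $i=0,1,\dots$ Player $I$ picks $u_i\in\Sigma_I^{f(i)}$ and then Player $O$ picks $v_i\in\Sigma_O$; $O$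 wins the play iff $\binom{u_0u_1\cdots}{v_0v_1\cdots}\in L$. Strategies: $\tau_I:\Sigma_O^*\to\Sigma_I^*$ with $|\tau_I(w)|=f(|w|)$, $\tau_O:\Sigma_I^+\to\Sigma_O$; a player wins the game if she/he has a strategy winning all consistent plays. *)

(* Defs.v *)
From mathcomp Require Import all_boot.
Set Implicit Arguments. Unset Strict Implicit. Unset Printing Implicit Defensive.

Inductive elform (V : Type) : Type :=
| ELTrue : elform V
| ELFalse : elform V
| ELVar : V -> elform V
| ELNeg : elform V -> elform V
| ELAnd : elform V -> elform V -> elform V
| ELOr : elform V -> elform V -> elform V.

Fixpoint elsize V (phi : elform V) : nat :=
  match phi with
  | ELTrue | ELFalse | ELVar _ => 1
  | ELNeg p => (elsize p).+1
  | ELAnd p q | ELOr p q => (elsize p + elsize q).+1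
  end.

Fixpoint elsat V (F : V -> Prop) (phi : elform V) : Prop :=
  match phi with
  | ELTrue => True
  | ELFalse => False
  | ELVar x => F x
  | ELNeg p => ~ elsat F p
  | ELAnd p q => elsat F p /\ elsat F q
  | ELOr p q => elsat F p \/ elsat F q
  end.

Record DWMA (Sigma : Type) := {
  dstate : finType;
  dinit : dstate;
  dtrans : dstate -> Sigma -> dstate;
  dacc : elform dstate }.

Definition dwma_size Sigma (A : DWMA Sigma) : nat :=
  #|dstate A| + elsize (dacc A).

Fixpoint drun Sigma (A : DWMA Sigma) (w : nat -> Sigma) (k : nat) : dstate A :=
  match k with
  | 0 => dinit A
  | k'.+1 => dtrans (drun A w k') (w k')
  end.

Definition visited Sigma (A : DWMA Sigma) (w : nat -> Sigma) : dstate A -> Prop :=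
  fun q => exists k, @drun Sigma A w k = q.

Definition dlang Sigma (A : DWMA Sigma) : (nat -> Sigma) -> Prop :=
  fun w => elsat (@visited Sigma A w) (dacc A).

Definition delay_fun (f : nat -> nat) : Prop := forall i, 1 <= f i.
Definition constant_delay (f : nat -> nat) : Prop := forall i, 0 < i -> f i = 1.

Definition blockstart (f : nat -> nat) (i : nat) : nat := \sum_(j < i) f j.

Definition block T (f : nat -> nat) (alpha : nat -> T) (i : nat) : seq T :=
  mkseq (fun j => alpha (blockstart f i + j)) (f i).

(* a play given by the concatenated input word alpha = u_0 u_1 ... and
   output word v = v_0 v_1 ... *)
Definition outcome (SI SO : Type) (alpha : nat -> SI) (v : nat -> SO) :
  nat -> SI * SO := fun k => (alpha k, v k).

Definition strategyI (SI SO : Type) (f : nat -> nat) (tauI : seq SO -> seq SI) : Prop :=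
  forall w, size (tauI w) = f (size w).

Definition consistentI (SI SO : Type) (f : nat -> nat) (tauI : seq SO -> seq SI)
  (alpha : nat -> SI) (v : nat -> SO) : Prop :=
  forall i, block f alpha i = tauI (mkseq v i).

(* Player O strategy tauO : SI^+ -> SO (its value on the empty word is never used) *)
Definition consistentO (SI SO : Type) (f : nat -> nat) (tauO : seq SI -> SO)
  (alpha : nat -> SI) (v : nat -> SO) : Prop :=
  forall i, v i = tauO (mkseq alpha (blockstart f i.+1)).

Definition I_wins (SI SO : Type) (f : nat -> nat) (L : (nat -> SI * SO) -> Prop) : Prop :=
  exists tauI : seq SO -> seq SI, strategyI f tauI /\
    forall alpha v, consistentI f tauI alpha v -> ~ L (outcome alpha v).

Definition O_wins (SI SO : Type) (f : nat -> nat) (L : (nat -> SI * SO) -> Prop) : Prop :=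
  exists tauO : seq SI -> SO,
    forall alpha v, consistentO f tauO alpha v -> L (outcome alpha v).

(* Main.v *)
Require Import Defs.
From HB Require Import structures.
From mathcomp Require Import all_boot.
From mathcomp Require Import zify.
Set Implicit Arguments. Unset Strict Implicit. Unset Printing Implicit Defensive.

Definition bitn (x i : nat) := odd (x %/ 2 ^ i).

Lemma bitn_succ v a : bitn v.+1 a = bitn v a (+) (v %% 2 ^ a == (2 ^ a).-1).
Proof.
rewrite /bitn. have Hp : 0 < 2 ^ a by rewrite expn_gt0.
rewrite {1}(divn_eq v (2 ^ a)). have Hr := ltn_pmod v Hp.
set q := v %/ 2 ^ a. set r := v %% 2 ^ a.
case: eqP => Hre.
- have -> : (q * 2 ^ a + r).+1 = q.+1 * 2 ^ a by rewrite Hre mulSn; lia.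
  by rewrite mulnK // oddS addbT.
- rewrite -addnS divnMDl // divn_small ?addn0 ?addbF //. lia.
Qed.

Lemma bitn_mod w E a : a < E -> bitn (w %% 2 ^ E) a = bitn w a.
Proof.
move=> aE; rewrite /bitn.
have Hp : 0 < 2 ^ a by rewrite expn_gt0.
have HE : 2 ^ E = 2 ^ (E - a) * 2 ^ a by rewrite -expnD subnK // ltnW.
rewrite {2}(divn_eq w (2 ^ E)) HE mulnA divnMDl // oddD oddM.
rewrite oddX /=. have -> : (E - a == 0) = false by apply/eqP; lia. by rewrite andbF.
Qed.


Lemma mod_succ_pow v a :
  (v %% 2 ^ a.+1 == (2 ^ a.+1).-1) = (v %% 2 ^ a == (2 ^ a).-1) && bitn v a.
Proof.
rewrite /bitn. have Hp : 0 < 2 ^ a by rewrite expn_gt0.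
have H1 : v %% 2 ^ a.+1 = odd (v %/ 2 ^ a) * 2 ^ a + v %% 2 ^ a.
  rewrite expnS mulnC. rewrite {1}(divn_eq v (2 ^ a)).
  rewrite {1}(divn_eq (v %/ 2 ^ a) 2) modn2.
  rewrite mulnDl -mulnA [2 * _]mulnC -addnA modnMDl modn_small //.
  have := ltn_pmod v Hp. case: (odd _); lia.
rewrite H1 expnS. have := ltn_pmod v Hp. set r := v %% 2 ^ a. set t := 2 ^ a.
move: Hp; rewrite -/t. case: (odd _) => /=; rewrite ?mul1n ?mul0n ?add0n.
- move=> Ht Hr. apply/idP/idP => /eqP H; apply/eqP; lia.
- move=> Ht Hr. rewrite andbF. apply/negbTE/eqP. lia.
Qed.

Lemma bits_inj j x y : x < 2 ^ j -> y < 2 ^ j ->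
  (forall i, i < j -> bitn x i = bitn y i) -> x = y.
Proof.
elim: j x y => [|j IH] x y.
- rewrite expn0 !ltnS !leqn0 => /eqP -> /eqP -> //.
- move=> Hx Hy H.
  have H0 := H 0 isT. rewrite /bitn expn0 !divn1 in H0.
  have Hd : x./2 = y./2.
    apply: IH; first by move: Hx; rewrite expnS; lia.
    - by move: Hy; rewrite expnS; lia.
    - move=> i Hi. rewrite /bitn -!divn2 -!divnMA -expnS. exact: H.
  rewrite -(odd_double_half x) -(odd_double_half y) H0 Hd //.
Qed.

Inductive mark (m : nat) := MNone | MA of 'I_m.+1 | MC | MX0 | MXX1 | MXX2 | MF.
Arguments MNone {m}. Arguments MA {m}. Arguments MC {m}. Arguments MX0 {m}.
Arguments MXX1 {m}. Arguments MXX2 {m}. Arguments MF {m}.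
Definition menc m (x : mark m) : option ('I_m.+1 + 'I_5) :=
  match x with MNone => None | MA i => Some (inl i) | MC => Some (inr (@Ordinal 5 0 isT))
  | MX0 => Some (inr (@Ordinal 5 1 isT)) | MXX1 => Some (inr (@Ordinal 5 2 isT))
  | MXX2 => Some (inr (@Ordinal 5 3 isT)) | MF => Some (inr (@Ordinal 5 4 isT)) end.
Definition mdec m (y : option ('I_m.+1 + 'I_5)) : option (mark m) :=
  Some match y with None => MNone | Some (inl i) => MA i
  | Some (inr j) => match val j return mark m with 0 => @MC m | 1 => @MX0 m
       | 2 => @MXX1 m | 3 => @MXX2 m | _ => @MF m end end.
Lemma mencK m : pcancel (@menc m) (@mdec m).
Proof. by move=> x; case: x. Qed.
HB.instance Definition _ m := Countable.copy (mark m) (pcan_type (@mencK m)).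
HB.instance Definition _ m := Finite.copy (mark m) (pcan_type (@mencK m)).

Inductive St (m : nat) := Init | Wt of bool & bool | SA of 'I_m.+1 & bool | SC of bool
 | W1 of 'I_m.+1 & bool & bool & bool | WW of bool & bool
 | W2 of 'I_m.+1 & bool & bool & bool | Zs of bool | SF of bool | SFe of bool | ACC | REJ.
Arguments Init {m}. Arguments Wt {m}. Arguments SA {m}. Arguments SC {m}.
Arguments W1 {m}. Arguments WW {m}. Arguments W2 {m}. Arguments Zs {m}.
Arguments SF {m}. Arguments SFe {m}. Arguments ACC {m}. Arguments REJ {m}.

Notation scode m := ('I_12 * 'I_m.+1 * bool * bool * bool)%type.
Definition senc m (s : St m) : scode m :=
  match s with
  | Init => (@Ordinal 12 0 isT, ord0, false, false, false)
  | Wt b c => (@Ordinal 12 1 isT, ord0, b, c, false)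
  | SA i b => (@Ordinal 12 2 isT, i, b, false, false)
  | SC b => (@Ordinal 12 3 isT, ord0, b, false, false)
  | W1 i a b c => (@Ordinal 12 4 isT, i, a, b, c)
  | WW b c => (@Ordinal 12 5 isT, ord0, b, c, false)
  | W2 i a b c => (@Ordinal 12 6 isT, i, a, b, c)
  | Zs b => (@Ordinal 12 7 isT, ord0, b, false, false)
  | SF b => (@Ordinal 12 8 isT, ord0, b, false, false)
  | SFe b => (@Ordinal 12 9 isT, ord0, b, false, false)
  | ACC => (@Ordinal 12 10 isT, ord0, false, false, false)
  | REJ => (@Ordinal 12 11 isT, ord0, false, false, false)
  end.
Definition sdec m (x : scode m) : option (St m) :=
  let: (t, i, a, b, c) := x in
  Some match val t with
  | 0 => Init | 1 => Wt a b | 2 => SA i a | 3 => SC a | 4 => W1 i a b c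
  | 5 => WW a b | 6 => W2 i a b c | 7 => Zs a | 8 => SF a | 9 => SFe a
  | 10 => ACC | _ => REJ end.
Lemma sencK m : pcancel (@senc m) (@sdec m).
Proof. by move=> x; case: x. Qed.
HB.instance Definition _ m := Countable.copy (St m) (pcan_type (@sencK m)).
HB.instance Definition _ m := Finite.copy (St m) (pcan_type (@sencK m)).

Lemma card_St m : #|{: St m}| <= 96 * m.+1.
Proof.
have := @leq_card _ _ _ (pcan_inj (@sencK m)). move=> H. apply: leq_trans H _.
rewrite !card_prod !card_ord card_bool. lia.
Qed.

Ltac clb := repeat match goal with H : @eq bool _ ?b |- _ =>
  tryif (first [constr_eq b true | constr_eq b false]) then fail else clear H end.
Ltac lia' := clb; lia.

Section Can.
Variable m : nat.
Local Notation n := m.+1.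
Definition E := 2 ^ n.
Definition NN := 2 ^ E.
Definition PP := NN * E.
Lemma n_lt_E : n < E. Proof. exact: ltn_expl. Qed.
Lemma E_gt1 : 1 < E. Proof. have := n_lt_E. lia. Qed.
Lemma E_gt0 : 0 < E. Proof. have := n_lt_E. lia. Qed.
Lemma NN_gt1 : 1 < NN. Proof. rewrite /NN -{1}(expn0 2) ltn_exp2l //. exact: E_gt0. Qed.

Definition ca k := k %% E.
Definition blk k := k %/ E.
Definition cval k := blk k %% NN.
Definition cx k := bitn (cval k) (ca k).
Definition cc k := cval k %% 2 ^ (ca k) == (2 ^ (ca k)).-1.

Lemma ca_lt k : ca k < E. Proof. exact: ltn_pmod E_gt0. Qed.
Lemma k_eq k : k = blk k * E + ca k. Proof. exact: divn_eq. Qed.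

Lemma succ_split k :
  (ca k == E.-1 /\ ca k.+1 = 0 /\ blk k.+1 = (blk k).+1) \/
  (ca k != E.-1 /\ ca k.+1 = (ca k).+1 /\ blk k.+1 = blk k).
Proof.
have HE := E_gt0. have Hc := ca_lt k.
have Hk : k.+1 = blk k * E + (ca k).+1 by rewrite {1}(k_eq k) addnS.
case: eqP => Hw; [left | right]; split => //.
- have Hk' : k.+1 = (blk k).+1 * E + 0 by rewrite Hk mulSn; lia.
  by rewrite /ca /blk Hk' modnMDl mod0n divnMDl // div0n addn0.
- have Hs : (ca k).+1 < E by lia.
  rewrite /ca /blk Hk modnMDl modn_small // divnMDl // divn_small // addn0.
  by split.
Qed.

Lemma ca_succ k : ca k.+1 = (ca k).+1 %% E.
Proof. by rewrite /ca -addn1 -modnDml addn1. Qed.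

Lemma cc_succ k : cc k.+1 = if ca k == E.-1 then true else cc k && cx k.
Proof.
case: (succ_split k) => [[-> [H1 H2]] | [/negbTE -> [H1 H2]]].
- by rewrite /cc H1 expn0 modn1.
- by rewrite /cc /cx /cval H1 H2 mod_succ_pow.
Qed.

Lemma cx_addE k : cx (k + E) = cx k (+) cc k.
Proof.
have HE := E_gt0. have Hc := ca_lt k.
have Hk : k + E = (blk k).+1 * E + ca k by rewrite {1}(k_eq k) mulSn; lia.
have Ha : ca (k + E) = ca k by rewrite /ca modnDr.
have Hb : blk (k + E) = (blk k).+1.
  by rewrite /blk Hk divnMDl // divn_small // addn0.
rewrite /cx Ha /cval Hb -addn1 -modnDml addn1 /NN bitn_mod //.
by rewrite bitn_succ.
Qed.

Lemma cx_small k : k < E -> cx k = false.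
Proof. move=> H. by rewrite /cx /cval /blk divn_small // mod0n /bitn div0n. Qed.

Lemma ca0 : ca 0 = 0. Proof. by rewrite /ca mod0n. Qed.
Lemma cc0 : cc 0. Proof. by rewrite /cc ca0 expn0 modn1. Qed.

Lemma ff_final k : cc k -> cx k -> ca k = E.-1 -> PP <= k.+1.
Proof.
move=> Hc Hx Ha.
have HE := E_gt0. have HN : 0 < NN by have := NN_gt1; lia.
have H1 : cval k %% 2 ^ E == (2 ^ E).-1.
  have -> : E = (ca k).+1 by rewrite Ha; lia.
  by rewrite mod_succ_pow; apply/andP; split; [exact: Hc | exact: Hx].
have Hv : cval k < 2 ^ E by apply: ltn_pmod.
rewrite modn_small // in H1. move/eqP: H1. rewrite -/NN => H1.
have Hb := divn_eq (blk k) NN. rewrite -/(cval k) H1 in Hb.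
case: (succ_split k) => [[_ [H2 H3]] | [H2 _]]; last by rewrite Ha eqxx in H2.
have Hk1 := k_eq k.+1. rewrite H2 H3 in Hk1.
rewrite /PP Hk1. set q := blk k %/ NN in Hb.
rewrite Hb. nia.
Qed.

Lemma pq_eq p q : ca p = ca q -> blk p = (blk q).+1 -> p = q + E.
Proof. move=> H1 H2. rewrite (k_eq p) (k_eq q) H1 H2 mulSn. lia. Qed.


Local Notation SIt := ('I_E * bool * bool * bool)%type.
Local Notation SOt := (bool * mark m)%type.
Definition la (l : SIt) : nat := l.1.1.1.
Definition lx (l : SIt) : bool := l.1.1.2.
Definition lc (l : SIt) : bool := l.1.2.
Definition lf (l : SIt) : bool := l.2.
Definition wrapl (l : SIt) := la l == E.-1.
Definition r1 (l : SIt) (i : nat) := bitn ((la l + (E - i)) %% E) i.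
Definition r2 (l : SIt) (i : nat) := bitn ((la l + (m - i)) %% E) i.

Definition waitstep (b wr : bool) (l : SIt) (mk : mark m) : St m :=
  match mk with
  | MNone => Wt b (wr || wrapl l)
  | MA i => SA i (bitn ((la l).+1 %% E) i)
  | MC => SC (if wrapl l then true else lc l && lx l)
  | MX0 => if ~~ wr && lx l then ACC else REJ
  | MXX1 => W1 ord0 (r1 l 0) (lx l (+) lc l) (wrapl l)
  | MXX2 => REJ
  | MF => if (la l == 0) && lx l then (if wrapl l then SFe b else SF b) else REJ
  end.

Definition w2 (i : nat) (e cnt : bool) (l : SIt) : St m :=
  if i == m then (if cnt && (lx l != e) then Zs (r2 l i) else REJ)
  else if cnt && wrapl l then REJ
  else if i < m then W2 (inord i) (r2 l i) e (cnt || wrapl l) else REJ.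

Definition trans (s : St m) (y : SIt * SOt) : St m :=
  let: (l, o) := y in
  match s with
  | Init => if (la l != 0) || ~~ lc l then ACC else waitstep o.1 false l o.2
  | Wt b wr => waitstep b wr l o.2
  | SA i bb => if bitn (la l) i != bb then ACC else REJ
  | SC c => if lc l != c then ACC else REJ
  | W1 i _ e cnt => if cnt && wrapl l then REJ else
      if i < m then W1 (inord i.+1) (r1 l i.+1) e (cnt || wrapl l) else WW e (cnt || wrapl l)
  | WW e cnt => if o.2 is MXX2 then w2 0 e cnt l else
      if cnt && wrapl l then REJ else WW e (cnt || wrapl l)
  | W2 i _ e cnt => w2 i.+1 e cnt l
  | Zs _ => REJ
  | SF b => if lx l then (if wrapl l then SFe b else SF b) else REJ
  | SFe b => if lf l == b then ACC else REJ
  | ACC => ACC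
  | REJ => REJ
  end.

Definition V1 (i : 'I_n) (b : bool) : elform (St m) :=
  ELOr (ELOr (ELVar (W1 i b false false)) (ELVar (W1 i b false true)))
       (ELOr (ELVar (W1 i b true false)) (ELVar (W1 i b true true))).
Definition V2 (i : 'I_n) (b : bool) : elform (St m) :=
  if val i == m then ELVar (Zs b) else
  ELOr (ELOr (ELVar (W2 i b false false)) (ELVar (W2 i b false true)))
       (ELOr (ELVar (W2 i b true false)) (ELVar (W2 i b true true))).
Definition EqF (i : 'I_n) : elform (St m) :=
  ELOr (ELAnd (V1 i true) (V2 i true)) (ELAnd (V1 i false) (V2 i false)).
Definition bigAnd (s : seq 'I_n) : elform (St m) :=
  foldr (fun i acc => ELAnd (EqF i) acc) (ELTrue _) s.
Definition phi : elform (St m) := ELOr (ELVar ACC) (bigAnd (enum 'I_n)).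

Definition Aut : DWMA (SIt * SOt) :=
  {| dstate := St m; dinit := Init; dtrans := trans; dacc := phi |}.

Lemma elsize_EqF i : elsize (EqF i) <= 31.
Proof. rewrite /EqF /V1 /V2; by case: ifP. Qed.

Lemma elsize_bigAnd s : elsize (bigAnd s) <= 32 * size s + 1.
Proof.
elim: s => [//|i s IH]. have -> : elsize (bigAnd (i :: s)) = (elsize (EqF i) + elsize (bigAnd s)).+1 by [].
have := elsize_EqF i. rewrite /=. lia.
Qed.

Lemma size_Aut : dwma_size Aut <= 200 * n.
Proof.
rewrite /dwma_size. have H2 : #|dstate Aut| <= 96 * n := card_St m.
have := elsize_bigAnd (enum 'I_n). rewrite size_enum_ord => H1.
have -> : elsize (dacc Aut) = (1 + elsize (bigAnd (enum 'I_n))).+1 by [].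
move: H2; set X := #|dstate Aut|. lia.
Qed.

Lemma elsat_bigAnd (F : St m -> Prop) s :
  elsat F (bigAnd s) <-> (forall i, i \in s -> elsat F (EqF i)).
Proof.
elim: s => [|i s IH]; first by split.
change (elsat F (EqF i) /\ elsat F (bigAnd s) <-> (forall j, j \in i :: s -> elsat F (EqF j))).
split.
- move=> [H1 /IH H2] j; rewrite inE => /orP [/eqP -> //|]; exact: H2.
- move=> H; split; first by apply: H; rewrite inE eqxx.
  apply/IH => j Hj; apply: H; by rewrite inE Hj orbT.
Qed.



Definition ph (s : St m) : nat :=
  match s with
  | Init => 0 | Wt _ _ => 0
  | W1 i _ _ _ => (val i).+1
  | WW _ _ => n.+1
  | W2 i _ _ _ => n.+2 + val i
  | Zs _ => 3 * n + 2
  | _ => 3 * n + 3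
  end.

Lemma ph_waitstep b wr l mk : ph (waitstep b wr l mk) >= 0.
Proof. by []. Qed.

Lemma ph_w2 i e cnt l : n.+1 < ph (w2 i e cnt l) \/ w2 i e cnt l = REJ.
Proof.
rewrite /w2. case: eqP => Hi; first by case: ifP => _; [left => /= ; lia | right].
case: ifP => _; first by right.
case: ifP => Hl; last by right.
left => /=. rewrite inordK; lia.
Qed.

Lemma ph_w2_ge i e cnt l : n.+1 + i < ph (w2 i e cnt l) \/ w2 i e cnt l = REJ.
Proof.
rewrite /w2. case: eqP => Hi; first by case: ifP => _; [left => /= ; lia | right].
case: ifP => _; first by right.
case: ifP => Hl; last by right.
left => /=. rewrite inordK; lia.
Qed.

Lemma ph_mono s y : ph s <= ph (trans s y).
Proof.
case: y => l [pb mk]. case: s => /=.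
- by [].
- by [].
- move=> i bb. by case: ifP.
- move=> c. by case: ifP.
- move=> i bt e cnt. have := ltn_ord i. case: ifP => _ /=; first lia. case: ifP => Hi /=.
  + move=> H. rewrite inordK; lia.
  + lia.
- move=> e cnt. case: mk => /=; try (case: ifP => _ /=; lia).
  case: (ph_w2 0 e cnt l) => [|->] /=; lia.
- move=> i bt e cnt. case: (ph_w2_ge i.+1 e cnt l) => [|->] /=; have := ltn_ord i; lia.
- move=> b /=. lia.
- move=> b. case: ifP => _ //=; case: ifP => _ /=; lia.
- move=> b. case: ifP => _ /=; lia.
- by [].
- by [].
Qed.

Definition strict (s : St m) := forall y, ph s < ph (trans s y).

Lemma strict_of_ph s : 0 < ph s -> ph s != n.+1 -> ph s < 3 * n + 3 -> strict s.
Proof.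
case: s => /=; try (intros; lia).
- move=> i bt e cnt _ H1 H2 [l [pb mk]] /=. have := ltn_ord i.
  case: ifP => _ /=; first lia. case: ifP => Hi /=.
  + move=> H. rewrite inordK; lia.
  + lia.
- move=> i bt e cnt _ H1 H2 [l [pb mk]] /=.
  case: (ph_w2_ge i.+1 e cnt l) => [|->] /=; lia.
- move=> b _ H1 H2 [l [pb mk]] /=. lia.
Qed.

Section Run.
Variables (alpha : nat -> SIt) (v : nat -> SOt).
Definition run k := drun Aut (outcome alpha v) k.
Lemma runS k : run k.+1 = trans (run k) (alpha k, v k).
Proof. by []. Qed.
Lemma run0 : run 0 = Init. Proof. by []. Qed.

Lemma ph_run_mono k1 k2 : k1 <= k2 -> ph (run k1) <= ph (run k2).
Proof.
move/subnK <-. elim: (k2 - k1) => [|d IH] //. rewrite addSn runS.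
exact: leq_trans IH (ph_mono _ _).
Qed.

Lemma uniq_time k1 k2 : strict (run k1) -> strict (run k2) ->
  ph (run k1) = ph (run k2) -> k1 = k2.
Proof.
move=> S1 S2 E12. wlog H : k1 k2 S1 S2 E12 / k1 <= k2.
  move=> W. case: (leqP k1 k2) => H; first exact: W.
  symmetry; apply: W => //; exact: ltnW.
move: H; rewrite leq_eqVlt => /orP [/eqP //|H].
have := ph_run_mono H. rewrite runS. have := S1 (alpha k1, v k1). lia.
Qed.

Lemma wait_seg k d b wr : run k = Wt b wr ->
  (forall j, k <= j < k + d -> (v j).2 = MNone) ->
  exists wr', run (k + d) = Wt b wr' /\
    (wr = false -> (forall j, k <= j < k + d -> ~~ wrapl (alpha j)) -> wr' = false).
Proof.
move=> Hk. elim: d => [|d IH] Hm.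
  exists wr; rewrite addn0; split => //.
have [wr' [H1 H2]] : exists wr', run (k + d) = Wt b wr' /\
    (wr = false -> (forall j, k <= j < k + d -> ~~ wrapl (alpha j)) -> wr' = false).
  apply: IH => j /andP [Hj1 Hj2]. apply: Hm. rewrite Hj1 /=. lia'.
exists (wr' || wrapl (alpha (k + d))). rewrite addnS runS H1 /= Hm; last first.
  apply/andP; split; lia'.
split => // Hw Hnw. rewrite H2 //.
- apply/negbTE/Hnw. apply/andP; split; lia'.
- move=> j /andP [Hj1 Hj2]. apply: Hnw. apply/andP; split; lia'.
Qed.

Lemma reach s : la (alpha 0) = 0 -> lc (alpha 0) ->
  (forall j, j < s -> (v j).2 = MNone) ->
  exists wr, run s.+1 = waitstep (v 0).1 wr (alpha s) (v s).2 /\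
    ((forall j, j < s -> ~~ wrapl (alpha j)) -> wr = false).
Proof.
move=> Ha Hc Hm.
have H1 : run 1 = waitstep (v 0).1 false (alpha 0) (v 0).2.
  by rewrite runS run0 /= Ha Hc.
case: s Hm => [|s] Hm; first by exists false.
have H1' : run 1 = Wt (v 0).1 (wrapl (alpha 0)) by rewrite H1 Hm.
have [wr' [H2 H3]] := @wait_seg 1 s _ _ H1' (fun j Hj => Hm j ltac:(lia')).
exists wr'. rewrite runS. rewrite add1n in H2. rewrite H2 /=. split => // Hnw.
apply: H3 => [|j Hj]; last by apply: Hnw; lia'.
apply/negbTE/Hnw. done.
Qed.

Section ISide.
Hypothesis Hcan : forall k, [/\ la (alpha k) = ca k, lx (alpha k) = cx k & lc (alpha k) = cc k].
Let b0 := (v 0).1.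
Hypothesis Hfree : forall k, PP <= k -> lf (alpha k) = ~~ b0.

Definition qdata (q k : nat) (e cnt : bool) :=
  [/\ e = cx q (+) cc q, cnt = (blk k == (blk q).+1), blk k <= (blk q).+1 &
      forall j, j < n -> ph (run (q + j.+1)) = j.+1].

Definition InvS (k : nat) (s : St m) : Prop :=
  match s with
  | Init => k = 0
  | Wt b wr => b = b0 /\ (~~ wr -> k < E)
  | SA i bb => bb = bitn (ca k) i
  | SC c => c = cc k
  | W1 i bt e cnt => i < k /\
      [/\ bt = bitn (ca (k - i.+1)) i, e = cx (k - i.+1) (+) cc (k - i.+1),
         cnt = (blk k == (blk (k - i.+1)).+1), blk k <= (blk (k - i.+1)).+1 &
         forall j, j <= i -> ph (run (k - i.+1 + j.+1)) = j.+1]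
  | WW e cnt => exists q, q + n <= k /\ qdata q k e cnt
  | W2 i bt e cnt => [/\ i < m, i < k &
      exists q, [/\ q + n <= k - i.+1, qdata q k e cnt,
        bt = bitn (ca (k.-1 + (m - i))) i &
        forall j, j <= i -> ph (run (k - i.+1 + j.+1)) = n.+2 + j]]
  | Zs bt => 0 < k /\ m <= k.-1 /\ exists q,
      [/\ bt = bitn (ca k.-1) m, blk k.-1 = (blk q).+1, cx k.-1 != cx q (+) cc q,
       forall j, j < n -> ph (run (q + j.+1)) = j.+1 &
       forall j, j < m -> ph (run (k.-1 - m + j.+1)) = n.+2 + j]
  | SF b => b = b0 /\ cc k
  | SFe b => b = b0 /\ PP <= k
  | ACC => False
  | REJ => True
  end.

Lemma wrap_can k : wrapl (alpha k) = (ca k == E.-1).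
Proof. by case: (Hcan k) => Ha _ _; rewrite /wrapl Ha. Qed.

Lemma blk_mono q k : q <= k -> blk q <= blk k.
Proof. exact: leq_div2r. Qed.

Lemma cnt_upd q k cnt : q <= k -> cnt = (blk k == (blk q).+1) -> blk k <= (blk q).+1 ->
  ~~ (cnt && wrapl (alpha k)) ->
  (cnt || wrapl (alpha k)) = (blk k.+1 == (blk q).+1) /\ blk k.+1 <= (blk q).+1.
Proof.
move=> Hqk -> Hb. have := blk_mono Hqk. rewrite wrap_can.
case: (succ_split k) => [[-> [_ ->]] | [/negbTE -> [_ ->]]].
- rewrite andbT orbT => H1 /eqP H2. split; [apply/esym/eqP|]; lia.
- by rewrite andbF orbF.
Qed.

Lemma r1_can q i : i <= E -> r1 (alpha (q + i)) i = bitn (ca q) i.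
Proof.
move=> Hi. case: (Hcan (q + i)) => Ha _ _.
rewrite /r1 Ha /ca modnDml -addnA subnKC // modnDr //.
Qed.

Lemma r2_can k i : r2 (alpha k) i = bitn (ca (k + (m - i))) i.
Proof. case: (Hcan k) => Ha _ _. by rewrite /r2 Ha /ca modnDml. Qed.

Lemma cc_ca0 k : ca k = 0 -> cc k.
Proof. by move=> H; rewrite /cc H expn0 modn1. Qed.

Lemma waitstep_inv k b wr mk : b = b0 -> (~~ wr -> k < E) ->
  run k.+1 = waitstep b wr (alpha k) mk -> InvS k.+1 (run k.+1).
Proof.
move=> Hb Hwr Hr. rewrite Hr. case: (Hcan k) => Ha Hx Hc.
have HE := E_gt1.
case: mk Hr => /= [Hr|i Hr|Hr|Hr|Hr|Hr|Hr].
- split => //. rewrite negb_or wrap_can => /andP [/Hwr H1 H2].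
  have : ca k = k by rewrite /ca modn_small.
  move: H2 => /eqP. lia.
- by rewrite Ha ca_succ.
- by rewrite wrap_can Hc Hx cc_succ.
- case: ifP => // /andP [/Hwr Hk]. by rewrite Hx cx_small.
- split => //. rewrite subSS subn0. split.
  + by rewrite -(r1_can k (i:=0)) ?addn0.
  + by rewrite Hx Hc.
  + have := cnt_upd (q:=k) (k:=k) (cnt:=false) (leqnn k) . rewrite ltn_eqF ?leqnn //=.
    move=> H. by case: (H erefl (leqnSn _) isT).
  + have := cnt_upd (q:=k) (k:=k) (cnt:=false) (leqnn k) . rewrite ltn_eqF ?leqnn //=.
    move=> H. by case: (H erefl (leqnSn _) isT).
  + move=> j. rewrite leqn0 => /eqP ->. by rewrite addn1 Hr.
- by [].
- rewrite Ha Hx. case: eqP => [Ha0|] //=. case: ifP => //.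
  case: ifP => Hw.
  + split => //. apply: ff_final => //; first exact: cc_ca0.
    by apply/eqP; rewrite -wrap_can.
  + split => //. rewrite cc_succ -wrap_can Hw cc_ca0 //.
Qed.

Lemma Inv_step k : InvS k (run k) -> InvS k.+1 (run k.+1).
Proof.
move=> HI. have Hr := runS k. case: (Hcan k) => Ha Hx Hc.
have HE := E_gt1. have HnE := n_lt_E.
move: HI Hr. case Hs: (run k) => [|b wr|i bb|c|i bt e cnt|e cnt|i bt e cnt|bt|b|b||] /= HI Hr.
-
  subst k. move: Hr. rewrite Ha Hc ca0 cc0 /= => Hr.
  apply: (waitstep_inv (b:=(v 0).1) (wr:=false) (mk:=(v 0).2)) => // _. exact: E_gt0.
-
  case: HI => Hb Hw. exact: (waitstep_inv Hb Hw Hr).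
- rewrite Hr Ha HI. by rewrite eqxx.
- rewrite Hr Hc HI. by rewrite eqxx.
-
  case: HI => Hik [Hbt He Hcnt Hb Hch].
  set q := k - i.+1 in Hbt He Hcnt Hb Hch.
  have Hkq : k = q + i.+1 by rewrite /q subnK.
  have Hqk : q <= k by lia'.
  move: Hr. case: ifP => Hov Hr; rewrite Hr //.
  have [Hc1 Hc2] := cnt_upd Hqk Hcnt Hb (negbT Hov).
  case: ifP => Hi.
  + have Hiv : nat_of_ord (inord i.+1 : 'I_n) = i.+1 by rewrite inordK.
    rewrite /= Hiv. split; first lia'.
    have -> : k.+1 - i.+2 = q by lia'.
    split => //.
    * rewrite Hkq -(r1_can q (i:=i.+1)); last by have := ltn_ord i; lia'.
      by [].
    * move=> j Hj. case: (ltngtP j i.+1) => Hji.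
      -- exact: Hch.
      -- lia'.
      -- subst j. have -> : q + i.+2 = k.+1 by lia'.
         rewrite Hr Hi /= Hiv //.
  + exists q. split; first by have := ltn_ord i; lia'.
    split => // j Hj. apply: Hch. have := ltn_ord i. lia'.
-
  case: HI => q [Hqn [He Hcnt Hb Hch]].
  have Hqk : q <= k by lia'.
  move: Hr. case: (v k) => pb mk /=.
  case Hmk: mk => [||||||] /= Hr; try (
    move: Hr; case: ifP => Hov Hr; rewrite Hr //;
    have [Hc1 Hc2] := cnt_upd Hqk Hcnt Hb (negbT Hov);
    exists q; split; [lia' | by split]).
  move: Hr. rewrite /w2. case: eqP => Hm0.
  + case: ifP => [/andP [Hcn Hxe] Hr | _ Hr]; last by rewrite Hr.
    rewrite Hr /=. split => //. split; first lia'.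
    exists q. rewrite ?subn1 /=. split => //.
    * by rewrite r2_can -Hm0 subn0 addn0.
    * by apply/eqP; rewrite -Hcnt.
    * by rewrite -Hx -He.
    * move=> j Hj; lia'.
  + case: ifP => Hov; first by move=> ->.
    have [Hc1 Hc2] := cnt_upd Hqk Hcnt Hb (negbT Hov).
    case: ifP => Hm; last by move=> ->.
    move=> Hr; rewrite Hr /=.
    have Hiv : nat_of_ord (inord 0 : 'I_n) = 0 by rewrite inordK.
    rewrite Hiv. split => //. exists q. rewrite ?subn1 /=. split => //.
    * by rewrite -r2_can.
    * move=> j; rewrite leqn0 => /eqP ->. rewrite addn1 Hr /= Hiv //.
-
  case: HI => Him Hik [q [Hqn [He Hcnt Hb Hch1] Hbt Hch2]].
  have Hqk : q <= k by lia'.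
  move: Hr. rewrite /w2. case: eqP => Hm.
  + case: ifP => [/andP [Hcn Hxe] Hr | _ Hr]; last by rewrite Hr.
    rewrite Hr /=. split => //. split; first lia'.
    exists q. split => //.
    * by rewrite r2_can Hm subnn addn0.
    * by apply/eqP; rewrite -Hcnt.
    * by rewrite -Hx -He.
    * move=> j Hj. have -> : k - m + j.+1 = k - i.+1 + j.+1 by lia'.
      apply: Hch2. lia'.
  + case: ifP => Hov; first by move=> ->.
    have [Hc1 Hc2] := cnt_upd Hqk Hcnt Hb (negbT Hov).
    case: ifP => Hm2; last by move=> ->.
    move=> Hr; rewrite Hr /=.
    have Hiv : nat_of_ord (inord i.+1 : 'I_n) = i.+1 by rewrite inordK //; lia'.
    rewrite Hiv. split; [done | by rewrite ltnS | ]. exists q.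
    have -> : k.+1 - i.+2 = k - i.+1 by lia'.
    split => //.
    * by rewrite -r2_can.
    * move=> j Hj. case: (ltngtP j i.+1) => Hji.
      -- exact: Hch2.
      -- lia'.
      -- subst j. have -> : k - i.+1 + i.+2 = k.+1 by lia'.
         rewrite Hr /= Hiv //.
- by rewrite Hr.
-
  case: HI => Hb Hcc. move: Hr. rewrite Hx wrap_can.
  case: ifP => Hxk; last by move=> ->.
  case: ifP => Hw Hr; rewrite Hr /=; split => //.
  + apply: ff_final => //. exact/eqP.
  + by rewrite cc_succ Hw Hcc Hxk.
-
  case: HI => Hb HP. rewrite Hr (Hfree HP) Hb.
  by case: (b0).
- by [].
- by rewrite Hr.
Qed.

Lemma Inv_all k : InvS k (run k).
Proof. elim: k => [|k IH]; [by rewrite run0 | exact: Inv_step]. Qed.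

Lemma elsat_V1 (F : St m -> Prop) i b : elsat F (V1 i b) -> exists e c, F (W1 i b e c).
Proof. by rewrite /V1 /= => [[[H|H]|[H|H]]]; do 2 eexists; exact: H. Qed.

Lemma elsat_V2 (F : St m -> Prop) i b : elsat F (V2 i b) ->
  if val i == m then F (Zs b) else exists e c, F (W2 i b e c).
Proof.
rewrite /V2; case: eqP => _ //=.
by move=> [[H|H]|[H|H]]; do 2 eexists; exact: H.
Qed.

Lemma strictW1 k i : i < n -> ph (run k) = i.+1 -> strict (run k).
Proof. move=> Hi Hp. apply: strict_of_ph; rewrite Hp //; [apply/eqP|]; lia'. Qed.
Lemma strictW2 k i : i < m -> ph (run k) = n.+2 + i -> strict (run k).
Proof. move=> Hi Hp. apply: strict_of_ph; rewrite Hp //; [apply/eqP|]; lia'. Qed.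
Lemma strictZ k : ph (run k) = 3 * n + 2 -> strict (run k).
Proof. move=> Hp. apply: strict_of_ph; rewrite Hp //; [apply/eqP|]; lia'. Qed.

Lemma I_reject : ~ dlang Aut (outcome alpha v).
Proof.
rewrite /dlang /= => [[[k Hk] | Hand]].
  have := Inv_all k. by rewrite /run Hk.
have Hall := (elsat_bigAnd _ _).1 Hand.
have Hmax := Hall ord_max (mem_enum _ _).
have [bz [t Ht]] : exists bz, exists t, run t = Zs bz.
  move: Hmax; rewrite /EqF /= => [[[_ H]|[_ H]]]; move: (elsat_V2 H); rewrite /= eqxx;
  move=> [t Ht]; by do 2 eexists; exact: Ht.
have := Inv_all t. rewrite Ht /= => [[Ht0 [Hmt [q [Hbz Hblk Hxne Hch1 Hch2]]]]].
set p := t.-1 in Hmt Hbz Hblk Hxne Hch2.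
have Hbits : forall i, i < n -> bitn (ca q) i = bitn (ca p) i.
  move=> i Hi. have := Hall (Ordinal Hi) (mem_enum _ _).
  have key : forall b, elsat (@visited _ Aut (outcome alpha v)) (V1 (Ordinal Hi) b) ->
      elsat (@visited _ Aut (outcome alpha v)) (V2 (Ordinal Hi) b) ->
      bitn (ca q) i = b /\ bitn (ca p) i = b.
    move=> b H1 H2. split.
    - have [e [c [k1 Hk1]]] := elsat_V1 H1.
      have := Inv_all k1. rewrite /run Hk1 /= => [[Hik [Hb1 _ _ _ Hc1]]].
      have E1 := Hc1 i (leqnn i). have E2 := Hch1 i Hi.
      have Hq : q + i.+1 = k1 - i.+1 + i.+1.
        apply: uniq_time; [exact: strictW1 E2 | exact: strictW1 E1 | by rewrite E1 E2].
      have -> : q = k1 - i.+1 by lia'.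
      by rewrite Hb1.
    - move: (elsat_V2 H2) => /=. case: eqP => Him.
      + move=> [t2 Ht2]. have := Inv_all t2. rewrite /run Ht2 /= => [[_ [_ [q2 [Hb2 _ _ _ _]]]]].
        have Htt : t2 = t.
          apply: uniq_time; [apply: strictZ | apply: strictZ | ];
            by rewrite /run ?Ht2 -/(run t) ?Ht.
        rewrite Hb2 Htt -/p Him //.
      + move=> [e [c [k2 Hk2]]].
        have := Inv_all k2. rewrite /run Hk2 /= => [[Him2 Hik2 [q2 [_ _ Hb2 Hc2]]]].
        have E1 := Hc2 i (leqnn i). have E2 := Hch2 i Him2.
        have Hk : p - m + i.+1 = k2 - i.+1 + i.+1.
          apply: uniq_time; [exact: strictW2 Him2 E2 | exact: strictW2 Him2 E1 | by rewrite E1 E2].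
        rewrite Hb2. congr (bitn (ca _) _). lia'.
  case=> [[H1 H2]|[H1 H2]]; case: (key _ H1 H2) => -> -> //.
have Hca : ca q = ca p.
  apply: (@bits_inj n); rewrite -/E; [exact: ca_lt | exact: ca_lt | exact: Hbits].
have Hpq := pq_eq (esym Hca) Hblk.
move: Hxne. by rewrite Hpq cx_addE eqxx.
Qed.

End ISide.
Section OSide.
Definition goodl k := [/\ la (alpha k) = ca k, lx (alpha k) = cx k & lc (alpha k) = cc k].

Lemma wrap_good k : la (alpha k) = ca k -> wrapl (alpha k) = (ca k == E.-1).
Proof. by move=> Ha; rewrite /wrapl Ha. Qed.

Lemma acc_visited k : run k = ACC -> dlang Aut (outcome alpha v).
Proof. move=> H. by left; exists k. Qed.

Lemma case_init : (la (alpha 0) != 0) || ~~ lc (alpha 0) -> run 1 = ACC.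
Proof. move=> H. by rewrite runS run0 /= H. Qed.

Lemma case_A p i : 0 < p -> (forall j, j < p -> goodl j) ->
  (forall j, j < p.-1 -> (v j).2 = MNone) -> (v p.-1).2 = MA i ->
  bitn (la (alpha p)) i != bitn (ca p) i -> run p.+1 = ACC.
Proof.
move=> Hp Hg Hm Hmk Hb.
have [Ha0 _ Hc0] := Hg 0 Hp. rewrite ca0 in Ha0. rewrite cc0 in Hc0.
have [wr [Hr _]] := reach Ha0 Hc0 Hm.
rewrite (ltn_predK Hp) in Hr. rewrite runS Hr Hmk /=.
have Hp1 : p.-1 < p by rewrite prednK.
have [Ha1 _ _] := Hg p.-1 Hp1.
rewrite Ha1 -ca_succ (ltn_predK Hp). by rewrite Hb.
Qed.

Lemma case_C p : 0 < p -> (forall j, j < p -> goodl j) ->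
  (forall j, j < p.-1 -> (v j).2 = MNone) -> (v p.-1).2 = MC ->
  lc (alpha p) != cc p -> run p.+1 = ACC.
Proof.
move=> Hp Hg Hm Hmk Hb.
have [Ha0 _ Hc0] := Hg 0 Hp. rewrite ca0 in Ha0. rewrite cc0 in Hc0.
have [wr [Hr _]] := reach Ha0 Hc0 Hm.
rewrite (ltn_predK Hp) in Hr. rewrite runS Hr Hmk /=.
have Hp1 : p.-1 < p by rewrite prednK.
have [Ha1 Hx1 Hc1] := Hg p.-1 Hp1.
rewrite (wrap_good Ha1) Hx1 Hc1 -cc_succ (ltn_predK Hp). by rewrite Hb.
Qed.

Lemma case_X0 p : p < E -> (forall j, j < p -> goodl j) ->
  la (alpha p) = ca p -> lc (alpha p) = cc p ->
  (forall j, j < p -> (v j).2 = MNone) -> (v p).2 = MX0 ->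
  lx (alpha p) != cx p -> run p.+1 = ACC.
Proof.
move=> HpE Hg Hap Hcp Hm Hmk Hb.
have [Ha0 Hc0] : la (alpha 0) = 0 /\ lc (alpha 0).
  case: (posnP p) => [Hp0|Hp]; first by subst p; rewrite Hap Hcp ca0 cc0.
  have [Ha0 _ Hc0] := Hg 0 Hp. by rewrite Ha0 Hc0 ca0 cc0.
have [wr [Hr Hw]] := reach Ha0 Hc0 Hm.
rewrite Hr Hmk /=.
have -> : wr = false.
  apply: Hw => j Hj. have [Ha1 _ _] := Hg j Hj. rewrite (wrap_good Ha1).
  rewrite /ca modn_small; last lia'. apply/eqP. lia'.
move: Hb. rewrite cx_small //. by case: (lx _).
Qed.

Lemma allones j : j < E -> bitn (NN.-1) j.
Proof.
move=> Hj. rewrite /bitn /NN.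
have Hp : 0 < 2 ^ j by rewrite expn_gt0.
have HE : 2 ^ E = 2 ^ (E - j) * 2 ^ j by rewrite -expnD subnK // ltnW.
have Hq : 0 < 2 ^ (E - j) by rewrite expn_gt0.
have -> : (2 ^ E).-1 = (2 ^ (E - j)).-1 * 2 ^ j + (2 ^ j).-1.
  rewrite HE. move: Hp Hq. set a := 2 ^ j. set b := 2 ^ (E - j). nia.
rewrite divnMDl // divn_small ?addn0; last by rewrite prednK.
have : odd (2 ^ (E - j)) = false by rewrite oddX subn_eq0 leqNgt Hj.
rewrite -(prednK Hq) /=. by case: (odd _).
Qed.

Lemma case_F : (forall j, j < PP -> goodl j) ->
  (forall j, j < PP - E -> (v j).2 = MNone) -> (v (PP - E)).2 = MF ->
  lf (alpha PP) = (v 0).1 -> run PP.+1 = ACC.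
Proof.
move=> Hg Hm Hmk Hf.
have HE := E_gt1. have HN := NN_gt1.
set s0 := PP - E.
have Hs : s0 = NN.-1 * E by rewrite /s0 /PP -subn1 mulnBl mul1n.
have HPs : PP = s0 + E by rewrite /s0 subnK // /PP leq_pmull //; lia'.
have Hca j : j < E -> ca (s0 + j) = j.
  by move=> Hj; rewrite /ca Hs modnMDl modn_small.
have Hblk j : j < E -> blk (s0 + j) = NN.-1.
  by move=> Hj; rewrite /blk Hs divnMDl ?divn_small ?addn0 //; lia'.
have Hcx j : j < E -> cx (s0 + j).
  move=> Hj; rewrite /cx /cval Hblk // Hca // modn_small; last lia'.
  exact: allones.
have Hgs j : j < E -> goodl (s0 + j) by move=> Hj; apply: Hg; lia'.
have Hp0 : 0 < PP by lia'.
have [Ha0 _ Hc0] := Hg 0 Hp0. rewrite ca0 in Ha0. rewrite cc0 in Hc0.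
have [wr [Hr _]] := reach Ha0 Hc0 Hm.
have Hsteps : forall j, j < E -> run (s0 + j.+1) = if j == E.-1 then SFe (v 0).1 else SF (v 0).1.
  elim=> [|j IH] Hj.
  - have [Ha1 Hx1 _] := Hgs 0 Hj. have Hc00 := Hca 0 Hj. have Hx00 := Hcx 0 Hj.
    rewrite !addn0 in Ha1 Hx1 Hc00 Hx00.
    rewrite addn1 Hr Hmk /= /wrapl Ha1 Hx1 Hc00 Hx00 eqxx /=.
    by have -> : (0 == E.-1) = false by apply/eqP; lia'.
  - have Hj' : j < E by lia'.
    have Hne : (j == E.-1) = false by apply/eqP; lia'.
    rewrite addnS runS (IH Hj') Hne /=.
    have [Ha1 Hx1 _] := Hgs j.+1 Hj.
    by rewrite Hx1 (Hcx _ Hj) /wrapl Ha1 Hca.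
have := Hsteps E.-1 ltac:(lia'). rewrite prednK; last lia'. rewrite eqxx -HPs => HP.
by rewrite runS HP /= Hf eqxx.
Qed.

Lemma twom_lt : (2 * m).+1 < E.
Proof.
rewrite /E. elim: m => [//|k IH]. rewrite expnS. lia'.
Qed.

Lemma blk_addE q : blk (q + E) = (blk q).+1.
Proof. rewrite /blk divnDr ?dvdnn // divnn E_gt0 addn1 //. Qed.

Lemma r1_gen l q i : la l = ca (q + i) -> i <= E -> r1 l i = bitn (ca q) i.
Proof. move=> Ha Hi. rewrite /r1 Ha /ca modnDml -addnA subnKC // modnDr //. Qed.

Lemma r2_gen l k i : la l = ca k -> r2 l i = bitn (ca (k + (m - i))) i.
Proof. move=> Ha. by rewrite /r2 Ha /ca modnDml. Qed.

Lemma V1_intro (F : St m -> Prop) i b e c : F (W1 i b e c) -> elsat F (V1 i b).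
Proof. by rewrite /V1; case: e; case: c => /= H; [right; right|right; left|left; right|left; left]. Qed.

Lemma V2_intro (F : St m -> Prop) i b e c : val i != m -> F (W2 i b e c) -> elsat F (V2 i b).
Proof. rewrite /V2 => /negbTE ->. by case: e; case: c => /= H; [right; right|right; left|left; right|left; left]. Qed.

Lemma V2_introZ (F : St m -> Prop) i b : val i = m -> F (Zs b) -> elsat F (V2 i b).
Proof. by rewrite /V2 => ->; rewrite eqxx. Qed.

Lemma case_XX p : E <= p -> (forall j, j < p -> goodl j) ->
  la (alpha p) = ca p -> lc (alpha p) = cc p -> lx (alpha p) != cx p ->
  (forall j, j < p - E -> (v j).2 = MNone) -> (v (p - E)).2 = MXX1 ->
  (forall j, p - E < j < p - m -> (v j).2 = MNone) -> (v (p - m)).2 = MXX2 ->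
  dlang Aut (outcome alpha v).
Proof.
move=> HEp Hg Hap Hcp Hxp Hm1 Hmk1 Hm2 Hmk2.
have HE := E_gt1. have Htm := twom_lt.
set q := p - E in Hm1 Hmk1 Hm2.
set r := p - m in Hm2 Hmk2.
have Hpq : p = q + E by rewrite /q subnK.
have Hqn : q + n < r by rewrite /r; lia'.
have Hrp : r + m = p by rewrite /r subnK //; lia'.
set e := cx q (+) cc q.
pose cn k := blk k == (blk q).+1.
have Hbnd : forall k, q <= k -> k <= p -> blk q <= blk k <= (blk q).+1.
  move=> k H1 H2. apply/andP; split; first exact: blk_mono.
  rewrite -blk_addE -Hpq. exact: blk_mono.
have Hcn_step : forall k, q <= k -> k < p ->
    ~~ (cn k && wrapl (alpha k)) /\ (cn k || wrapl (alpha k)) = cn k.+1.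
  move=> k H1 H2. have [Ha _ _] := Hg k H2. rewrite (wrap_good Ha).
  have /andP [B1 B2] := Hbnd k H1 (ltnW H2).
  have /andP [B3 B4] := Hbnd k.+1 (leqW H1) H2.
  rewrite /cn. case: (succ_split k) => [[-> [_ Hb]] | [/negbTE -> [_ Hb]]]; rewrite Hb.
  - rewrite andbT orbT. split; [apply/eqP|apply/esym/eqP]; lia'.
  - by rewrite andbF orbF.
have Hp0 : 0 < p by lia'.
have [Ha0 _ Hc0] := Hg 0 Hp0. rewrite ca0 in Ha0. rewrite cc0 in Hc0.
have [wr [Hr1 _]] := reach Ha0 Hc0 Hm1.
have HW1 : forall i, i < n -> run (q + i.+1) = W1 (inord i) (bitn (ca q) i) e (cn (q + i.+1)).
  elim=> [|i IH] Hi.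
  - have Hqp : q < p by lia'.
    have [Ha Hx Hc] := Hg q Hqp.
    rewrite addn1 Hr1 Hmk1 /=.
    have -> : (inord 0 : 'I_n) = ord0 by apply: val_inj; rewrite /= inordK.
    have [_ H] := Hcn_step q (leqnn q) Hqp.
    have Hf : cn q = false by rewrite /cn; apply/eqP; lia'.
    rewrite Hf /= in H.
    congr W1; last exact: H.
    + apply: r1_gen => //. by rewrite addn0.
    + by rewrite Hx Hc.
  - have Hi' : i < n by lia'. rewrite addnS runS (IH Hi') /=.
    have Hiv : nat_of_ord (inord i : 'I_n) = i by rewrite inordK.
    have Hk1 : q <= q + i.+1 by lia'.
    have Hk2 : q + i.+1 < p by lia'.
    have [H1 H2] := Hcn_step (q + i.+1) Hk1 Hk2.
    rewrite (negbTE H1) Hiv. have -> : i < m by lia'.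
    have [Ha _ _] := Hg (q + i.+1) Hk2.
    congr W1; last by rewrite H2 addnS.
    apply: (@r1_gen _ q i.+1); [by rewrite Ha | lia'].
have HWW0 : run (q + n.+1) = WW e (cn (q + n.+1)).
  rewrite addnS runS (HW1 m (ltnSn m)) /=.
  have Hiv : nat_of_ord (inord m : 'I_n) = m by rewrite inordK.
  have Hk1 : q <= q + n by lia'.
  have Hk2 : q + n < p by lia'.
  have [H1 H2] := Hcn_step (q + n) Hk1 Hk2. rewrite (negbTE H1) Hiv ltnn. by rewrite H2.
have HWW : forall d, q + n.+1 + d <= r -> run (q + n.+1 + d) = WW e (cn (q + n.+1 + d)).
  elim=> [|d IH] Hd; first by rewrite addn0.
  have Hd' : q + n.+1 + d <= r by lia'.
  rewrite addnS runS (IH Hd') /= Hm2; last by apply/andP; split; lia'.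
  have Hk1 : q <= q + n.+1 + d by lia'.
  have Hk2 : q + n.+1 + d < p by lia'.
  have [H1 H2] := Hcn_step _ Hk1 Hk2. by rewrite (negbTE H1) H2.
have HWr : run r = WW e (cn r).
  have Hd : q + n.+1 + (r - (q + n.+1)) <= r by rewrite subnKC; lia'.
  have := HWW _ Hd. rewrite subnKC; [by [] | lia'].
have HW2 : forall i, i <= m -> run (r + i.+1) = w2 i e (cn (r + i)) (alpha (r + i)).
  elim=> [|i IH] Hi.
  - by rewrite addn0 addn1 runS HWr /= Hmk2.
  - have Hi' : i <= m by lia'.
    rewrite addnS runS (IH Hi') {1}/w2.
    have -> : (i == m) = false by apply/eqP; lia'.
    have Hk1 : q <= r + i by lia'.
    have Hk2 : r + i < p by lia'.
    have [H1 H2] := Hcn_step _ Hk1 Hk2. rewrite (negbTE H1).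
    have -> : i < m by lia'.
    rewrite /= inordK; last lia'. by rewrite H2 addnS.
have Hcnp : cn p by rewrite /cn Hpq blk_addE.
have Hxe : lx (alpha p) != e by rewrite /e -cx_addE -Hpq.
have HZ : run p.+1 = Zs (bitn (ca p) m).
  have := HW2 m (leqnn m). rewrite addnS Hrp /w2 eqxx Hcnp Hxe /= => ->.
  by rewrite (r2_gen _ Hap) subnn addn0.
have Hcapq : ca p = ca q by rewrite Hpq /ca modnDr.
right. apply/elsat_bigAnd => i _.
have key : forall bb, bb = bitn (ca q) i ->
    elsat (@visited _ Aut (outcome alpha v)) (V1 i bb) /\
    elsat (@visited _ Aut (outcome alpha v)) (V2 i bb).
  move=> bb ->. split.
  - apply: (V1_intro (e:=e) (c:=cn (q + i.+1))). exists (q + i.+1).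
    rewrite -/(run _) HW1 // inord_val //.
  - case: (eqVneq (val i) m) => Him.
    + have Him2 := Him. apply: V2_introZ Him2 _. exists p.+1. have Him3 : nat_of_ord i = m := Him. by rewrite -/(run _) HZ -Hcapq Him3.
    + have Him0 : nat_of_ord i != m := Him. have Him2 := Him.
      apply: (V2_intro (e:=e) (c:=cn (r + i.+1))) Him2 _. exists (r + i.+1). have Him' : i < m by rewrite ltn_neqAle Him0 -ltnS ltn_ord.
      rewrite -/(run _) HW2; last lia'.
      rewrite /w2 (negbTE Him0).
      have Hk1 : q <= r + i by lia'.
      have Hk2 : r + i < p by lia'.
      have [H1 H2] := Hcn_step _ Hk1 Hk2. rewrite (negbTE H1) Him' H2 -addnS inord_val.
      have [Ha _ _] := Hg _ Hk2. rewrite (r2_gen _ Ha).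
      have -> : r + i + (m - i) = p by lia'.
      by rewrite Hcapq.
rewrite /EqF. case Hb: (bitn (ca q) i).
- left. exact: key.
- right. exact: key.
Qed.

End OSide.
End Run.

Definition FF := PP.+1.
Definition fO (i : nat) := if i is 0 then FF else 1.
Definition goodb (beta : nat -> SIt) k :=
  [&& la (beta k) == ca k, lx (beta k) == cx k & lc (beta k) == cc k].
Definition devp (beta : nat -> SIt) := find (fun k => ~~ goodb beta k) (iota 0 FF).
Definition pickbit (beta : nat -> SIt) p : 'I_n :=
  odflt ord0 [pick i : 'I_n | bitn (la (beta p)) i != bitn (ca p) i].
Definition planf (beta : nat -> SIt) (i : nat) : SOt :=
  let p := devp beta in
  if p < FF then
    (false,
     if la (beta p) != ca p then (if i == p.-1 then MA (pickbit beta p) else MNone)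
     else if lc (beta p) != cc p then (if i == p.-1 then MC else MNone)
     else if p < E then (if i == p then MX0 else MNone)
     else (if i == p - E then MXX1 else if i == p - m then MXX2 else MNone))
  else (if i == 0 then lf (beta PP) else false, if i == PP - E then MF else MNone).
Definition defl : SIt := (Ordinal (ca_lt 0), false, false, false).
Definition tauO (s : seq SIt) : SOt := planf (nth defl (take FF s)) (size s - FF).

Lemma bs_fO i : blockstart fO i.+1 = FF + i.
Proof.
rewrite /blockstart big_ord_recl /=. congr (_ + _).
rewrite (eq_bigr (fun _ => 1)) // sum1_card card_ord //.
Qed.

Lemma O_wins_Aut : O_wins fO (dlang Aut).
Proof.
exists tauO => alpha v Hc.
pose beta := nth defl (mkseq alpha FF).
have Hv : forall i, v i = planf beta i.
  move=> i. rewrite Hc bs_fO /tauO size_mkseq addKn.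
  congr planf. rewrite /mkseq iotaD map_cat take_size_cat //.
  by rewrite size_map size_iota.
have Hb : forall k, k < FF -> beta k = alpha k by move=> k Hk; rewrite /beta nth_mkseq.
have HPF : PP < FF by [].
set p := devp beta.
have Hbefore : forall j, j < p -> goodl alpha j.
  move=> j Hj. have Hjf : j < FF.
    apply: leq_trans Hj _. rewrite /p /devp. have := find_size (fun k => ~~ goodb beta k) (iota 0 FF).
    by rewrite size_iota.
  have := before_find 0 Hj. rewrite nth_iota // add0n => /negbFE /and3P [/eqP H1 /eqP H2 /eqP H3].
  by rewrite /goodl -(Hb j Hjf).
case: (ltnP p FF) => HpF.
-
  have Hdev : ~~ goodb beta p.
    have := nth_find 0 (a := fun k => ~~ goodb beta k) (s := iota 0 FF).
    rewrite has_find size_iota -/(devp beta) -/p nth_iota // add0n. by apply.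
  have Hvp : forall i, v i = (false, if la (alpha p) != ca p then (if i == p.-1 then MA (pickbit beta p) else MNone)
     else if lc (alpha p) != cc p then (if i == p.-1 then MC else MNone)
     else if p < E then (if i == p then MX0 else MNone)
     else (if i == p - E then MXX1 else if i == p - m then MXX2 else MNone)).
    by move=> i; rewrite Hv /planf -/p HpF (Hb p HpF).
  case: (eqVneq (la (alpha p)) (ca p)) => Ha.
  + case: (eqVneq (lc (alpha p)) (cc p)) => Hcc.
    * have Hx : lx (alpha p) != cx p.
        move: Hdev. by rewrite /goodb (Hb p HpF) Ha Hcc ?eqxx andbT /=.
      case: (ltnP p E) => HpE.
      -- apply: (acc_visited (k := p.+1)). apply: (case_X0 HpE Hbefore Ha Hcc) => //.
         ++ move=> j Hj. rewrite Hvp Ha Hcc ?eqxx /= HpE. by rewrite (ltn_eqF Hj).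
         ++ by rewrite Hvp Ha Hcc ?eqxx /= HpE ?eqxx.
      -- apply: (case_XX HpE Hbefore Ha Hcc Hx).
         ++ move=> j Hj. rewrite Hvp Ha Hcc ?eqxx /= ltnNge HpE /=.
            rewrite (ltn_eqF Hj). have -> : (j == p - m) = false by apply/eqP; have := n_lt_E; lia'.
            by [].
         ++ by rewrite Hvp Ha Hcc ?eqxx /= ltnNge HpE /= ?eqxx.
         ++ move=> j /andP [Hj1 Hj2]. rewrite Hvp Ha Hcc ?eqxx /= ltnNge HpE /=.
            by rewrite (gtn_eqF Hj1) (ltn_eqF Hj2).
         ++ rewrite Hvp Ha Hcc ?eqxx /= ltnNge HpE /=.
            have -> : (p - m == p - E) = false by apply/eqP; have := n_lt_E; lia'.
            by rewrite ?eqxx.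
    * case: (posnP p) => Hp0.
      -- apply: (acc_visited (k := 1)). apply: case_init. move: Hcc. rewrite Hp0 cc0.
         by case: (lc _) => // _; rewrite orbT.
      -- apply: (acc_visited (k := p.+1)). apply: (case_C Hp0 Hbefore) => //.
         ++ move=> j Hj. rewrite Hvp Ha Hcc ?eqxx /=. by rewrite (ltn_eqF Hj).
         ++ by rewrite Hvp Ha Hcc ?eqxx /= ?eqxx.
  + case: (posnP p) => Hp0.
    -- apply: (acc_visited (k := 1)). apply: case_init. move: Ha. by rewrite Hp0 ca0 => ->.
    -- apply: (acc_visited (k := p.+1)). apply: (case_A (i := pickbit beta p) Hp0 Hbefore).
       ++ move=> j Hj. rewrite Hvp Ha /=. by rewrite (ltn_eqF Hj).
       ++ by rewrite Hvp Ha /= ?eqxx.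
       ++ rewrite /pickbit. case: pickP => [i /= Hi | Hn] /=; first by rewrite (Hb p HpF) in Hi.
          exfalso. move: Ha => /eqP; apply.
          apply: (@bits_inj n); [ | exact: ca_lt | ].
          ** by have := ltn_ord (alpha p).1.1.1.
          ** move=> i Hi. have := Hn (Ordinal Hi). by rewrite /= (Hb p HpF) => /negbFE /eqP.
-
  have Hall : forall j, j < FF -> goodl alpha j.
    move=> j Hj. apply: Hbefore. exact: leq_trans Hj HpF.
  have Hp' : p = FF.
    apply/eqP; rewrite eqn_leq HpF andbT. rewrite /p /devp.
    have := find_size (fun k => ~~ goodb beta k) (iota 0 FF). by rewrite size_iota.
  have Hvn : forall i, v i = (if i == 0 then lf (alpha PP) else false, if i == PP - E then MF else MNone).
    move=> i. rewrite Hv /planf -/p Hp' ltnn. by rewrite (Hb PP HPF).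
  apply: (acc_visited (k := PP.+1)). apply: case_F.
  + move=> j Hj. apply: Hall. exact: ltnW.
  + move=> j Hj. by rewrite Hvn (ltn_eqF Hj).
  + by rewrite Hvn ?eqxx.
  + by rewrite Hvn ?eqxx.
Qed.

End Can.

Definition canl m k (fb : bool) : ('I_(E m) * bool * bool * bool)%type :=
  (Ordinal (ca_lt m k), cx m k, cc m k, fb).
Definition tauI m (g : nat -> nat) (w : seq (bool * mark m)%type) :
  seq ('I_(E m) * bool * bool * bool)%type :=
  mkseq (fun j => canl m (blockstart g (size w) + j)
     (if size w is 0 then false else ~~ (head (false, MNone) w).1)) (g (size w)).

Lemma bs_S g i : blockstart g i.+1 = blockstart g i + g i.
Proof. by rewrite /blockstart big_ord_recr. Qed.

Lemma cover g : delay_fun g -> forall k, exists i, blockstart g i <= k < blockstart g i.+1.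
Proof.
move=> Hg. elim=> [|k [i /andP [H1 H2]]].
- exists 0. rewrite bs_S /blockstart big_ord0 /=. exact: Hg.
- case: (ltnP k.+1 (blockstart g i.+1)) => H3.
  + exists i. by rewrite H3 ltnW.
  + exists i.+1. rewrite (bs_S g i.+1). have := Hg i.+1. lia.
Qed.

Lemma I_wins_Aut m g : delay_fun g -> \sum_(i < m.+1) g i <= NN m -> I_wins g (dlang (Aut m)).
Proof.
move=> Hg Hsum. exists (@tauI m g). split; first by move=> w; rewrite size_mkseq.
move=> alpha v Hc.
have Hg0 : g 0 < PP m.
  have : g 0 <= \sum_(i < m.+1) g i by rewrite big_ord_recl /=; lia.
  have := NN_gt1 m. rewrite /PP. have := E_gt1 m. nia.
have Hal : forall k, exists i, alpha k = canl m k (if i is 0 then false else ~~ (v 0).1) /\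
    (g 0 <= k -> 0 < i).
  move=> k. have [i /andP [H1 H2]] := cover Hg k. exists i.
  have Hj : k - blockstart g i < g i by rewrite bs_S in H2; lia.
  have := congr1 (fun s => nth (canl m 0 false) s (k - blockstart g i)) (Hc i).
  rewrite /block /tauI !nth_mkseq ?size_mkseq // subnKC // => ->.
  split.
  - case: i {H1 H2 Hj} => [|i] //=.
  - move=> Hk. case: i H1 H2 {Hj} => [|i] // _. rewrite bs_S /blockstart big_ord0 /=. lia.
apply: (I_reject (m := m)) => [k|k Hk].
- have [i [-> _]] := Hal k. by split.
- have [i [-> Hi]] := Hal k. have Hk' : g 0 <= k by lia.
  by case: i Hi => [/(_ Hk')|i _].
Qed.

Theorem theorem3 :
  exists c : nat, forall n : nat, 1 <= n ->
    exists (SI SO : finType) (A : DWMA (SI * SO)%type),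
      dwma_size A <= c * n /\
      (exists f, delay_fun f /\ constant_delay f /\ O_wins f (dlang A)) /\
      (forall g, delay_fun g -> \sum_(i < n) g i <= 2 ^ (2 ^ n) ->
         I_wins g (dlang A)).
Proof.
exists 200 => [[|m]] // _.
exists ('I_(E m) * bool * bool * bool)%type, (bool * mark m)%type, (Aut m).
split; first exact: size_Aut.
split.
- exists (fO m). split; first by case.
  split; first by case.
  exact: O_wins_Aut.
- move=> g Hg Hs. apply: I_wins_Aut => //.
Qed.
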